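(* Let $(x_n)_{n\in\mathbb{N}}$ be a strictly increasing sequence of nonnegative reals with $x_0=0$, $x_0!=1$, $x_n!=x_1\cdots x_n$, and let $\mathcal{N}(t)=\sum_{n\ge 0}t^n/x_n!$ have radius of convergence $R>0$. For $z\in\mathbb{C}$ with $|z|^2<R$ and $t\in\mathbb{R}$ define $$\check z(t)=\frac{z}{\mathcal{N}(|z|^2)}\sum_{n=0}^{\infty}\frac{|z|^{2n}}{x_n!}\exp\big(i(x_{n+2}-x_{n+1})t\big).$$ Then $|\check z(t)|\le |z|$ for all $t\in\mathbb{R}$.
   Context: $\check z(t)$ is the coherent-state expectation (lower symbol) of the time-evolved lowering operator under the Hamiltonian with spectrum $(x_{n+1})$, i.e. the semi-classical phase-space trajectory. *)

(* Defs.v *)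
From Stdlib Require Import Reals.
From Coquelicot Require Export Coquelicot.
Open Scope R_scope.

Fixpoint xfact (x : nat -> R) (n : nat) : R :=
  match n with
  | O => 1
  | S m => xfact x m * x (S m)
  end.

Definition Ncoef (x : nat -> R) (n : nat) : R := / xfact x n.

Definition Nfun (x : nat -> R) (t : R) : R := Series (fun n => Ncoef x n * t ^ n).

Definition cis (theta : R) : C := (cos theta, sin theta).

Definition Csum (a : nat -> C) : C :=
  (Series (fun n => fst (a n)), Series (fun n => snd (a n))).

Definition zcheck (x : nat -> R) (z : C) (t : R) : C :=
  (z / RtoC (Nfun x (Cmod z ^ 2)) *
   Csum (fun n => RtoC (Cmod z ^ (2 * n) / xfact x n)
                  * cis ((x (n + 2)%nat - x (n + 1)%nat) * t)))%C.

(* Main.v *)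
Require Import Defs.
From Stdlib Require Import Reals Lra.
From Coquelicot Require Import Coquelicot.
Open Scope R_scope.

Lemma Series_0' : Series (fun _ => 0) = 0.
Proof.
  rewrite (Series_ext _ (fun n => 0 * 0)) by (intros; ring).
  rewrite Series_scal_l. ring.
Qed.

Lemma series_le_gen (f g : nat -> R) : ex_series f -> ex_series g ->
  (forall n, f n <= g n) -> Series f <= Series g.
Proof.
  intros Hf Hg H.
  assert (0 <= Series (fun n => g n - f n)).
  { rewrite <- Series_0'.
    apply Series_le. intros n; specialize (H n); lra.
    apply (ex_series_minus g f Hg Hf). }
  rewrite Series_minus in H0 by auto. lra.
Qed.

Lemma ex_series_bound (a c : nat -> R) (K : R) : ex_series a ->
  (forall n, 0 <= a n) -> (forall n, Rabs (c n) <= K) -> ex_series (fun n => a n * c n).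
Proof.
  intros Ha Hp Hc.
  apply (@ex_series_le R_AbsRing R_CompleteNormedModule _ (fun n => K * a n)).
  - intros n. change norm with Rabs. rewrite Rabs_mult, Rabs_pos_eq by auto.
    rewrite Rmult_comm. apply Rmult_le_compat_r; auto.
  - apply (ex_series_scal_l K a Ha).
Qed.

Lemma cs_bound (p q th : R) : p * cos th + q * sin th <= sqrt (p^2 + q^2).
Proof.
  assert (H : (p * cos th + q * sin th)^2 <= p^2 + q^2).
  { pose proof (sin2_cos2 th). unfold Rsqr in H.
    assert (p^2+q^2 - (p * cos th + q * sin th)^2 = (p * sin th - q * cos th)^2).
    { replace (p^2+q^2) with ((p^2+q^2)*(sin th * sin th + cos th * cos th)) by (rewrite H; ring). ring. }
    pose proof (pow2_ge_0 (p * sin th - q * cos th)). lra. }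
  eapply Rle_trans. apply RRle_abs.
  rewrite <- (sqrt_pow2 (Rabs (p * cos th + q * sin th))) by apply Rabs_pos. apply sqrt_le_1_alt.
  rewrite pow2_abs. exact H.
Qed.

Lemma xfact_pos (x : nat -> R) : (forall n, 0 <= x n) -> (forall n, x n < x (S n)) ->
  forall n, 0 < xfact x n.
Proof.
  intros H0 H1. induction n; simpl. lra.
  apply Rmult_lt_0_compat; auto. specialize (H0 n); specialize (H1 n); lra.
Qed.

Theorem mainTheorem4 (x : nat -> R) :
  x 0%nat = 0 ->
  (forall n, 0 <= x n) ->
  (forall n, x n < x (S n)) ->
  Rbar_lt (Finite 0) (CV_radius (Ncoef x)) ->
  forall (z : C), Rbar_lt (Finite (Cmod z ^ 2)) (CV_radius (Ncoef x)) ->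
  forall (t : R), Cmod (zcheck x z t) <= Cmod z.
Proof.
  intros Hx0 Hnn Hinc _ z Hz t.
  set (r := Cmod z).
  set (a := fun n => r ^ (2 * n) / xfact x n).
  set (th := fun n => (x (n + 2)%nat - x (n + 1)%nat) * t).
  assert (Hfp := xfact_pos x Hnn Hinc).
  assert (Hap : forall n, 0 <= a n).
  { intros n. unfold a. apply Rmult_le_pos. apply pow_le. apply Cmod_ge_0.
    left. apply Rinv_0_lt_compat. auto. }
  assert (HaN : forall n, Ncoef x n * (r^2) ^ n = a n).
  { intros n. unfold a, Ncoef. rewrite <- pow_mult. unfold Rdiv. ring. }
  assert (Hex : ex_series a).
  { assert (Hr : Rbar_lt (Rabs (r^2)) (CV_radius (Ncoef x))).
    { rewrite Rabs_pos_eq. exact Hz. apply pow2_ge_0. }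
    pose proof (CV_disk_inside _ _ Hr) as Hd.
    eapply ex_series_ext; [|exact Hd]. intros n. simpl.
    rewrite HaN. apply Rabs_pos_eq. auto. }
  set (N := Series a).
  assert (HN : Nfun x (Cmod z ^ 2) = N).
  { unfold Nfun, N. apply Series_ext. intros n. apply HaN. }
  assert (HN1 : 1 <= N).
  { unfold N. rewrite Series_incr_1 by exact Hex.
    assert (a 0%nat = 1). { unfold a. simpl. field. }
    rewrite H. assert (0 <= Series (fun k => a (S k))).
    { rewrite <- Series_0'. apply Series_le.
      intros; split; [lra| auto]. apply ex_series_incr_1 in Hex. exact Hex. }
    lra. }
  set (Sc := Series (fun n => a n * cos (th n))).
  set (Ss := Series (fun n => a n * sin (th n))).
  assert (Hcs : Csum (fun n => RtoC (Cmod z ^ (2 * n) / xfact x n) * cis ((x (n + 2)%nat - x (n + 1)%nat) * t))%C = (Sc, Ss)).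
  { unfold Csum, Sc, Ss. f_equal; apply Series_ext; intros n; unfold a, th, cis, RtoC;
    simpl; fold r; ring. }
  set (M := Cmod (Sc, Ss)).
  assert (HM : M <= N).
  { assert (Hc : ex_series (fun n => a n * cos (th n))).
    { apply (ex_series_bound a _ 1); auto. intros; apply Rabs_le; apply COS_bound. }
    assert (Hs : ex_series (fun n => a n * sin (th n))).
    { apply (ex_series_bound a _ 1); auto. intros; apply Rabs_le; apply SIN_bound. }
    assert (HM2 : M * M = Sc * Sc + Ss * Ss).
    { unfold M, Cmod. simpl. rewrite sqrt_sqrt. ring.
      pose proof (pow2_ge_0 Sc). pose proof (pow2_ge_0 Ss). simpl in *. lra. }
    assert (HMN : M * M <= N * M).
    { rewrite HM2.
      replace (Sc * Sc + Ss * Ss) with (Series (fun n => a n * (Sc * cos (th n) + Ss * sin (th n)))).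
      2:{ rewrite <- (Series_ext (fun n => Sc * (a n * cos (th n)) + Ss * (a n * sin (th n)))).
          2:{ intros; ring. }
          rewrite Series_plus. rewrite !Series_scal_l. fold Sc Ss. ring.
          apply (ex_series_scal_l Sc _ Hc). apply (ex_series_scal_l Ss _ Hs). }
      replace (N * M) with (Series (fun n => a n * M)).
      2:{ rewrite <- (Series_ext (fun n => M * a n)) by (intros; ring).
          rewrite Series_scal_l. unfold N. ring. }
      apply series_le_gen.
      - apply (ex_series_bound a _ (Rabs Sc + Rabs Ss)); auto. intros n.
        eapply Rle_trans. apply Rabs_triang. rewrite !Rabs_mult.
        apply Rplus_le_compat.
        + rewrite <- (Rmult_1_r (Rabs Sc)) at 2. apply Rmult_le_compat_l. apply Rabs_pos.
          apply Rabs_le; apply COS_bound.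
        + rewrite <- (Rmult_1_r (Rabs Ss)) at 2. apply Rmult_le_compat_l. apply Rabs_pos.
          apply Rabs_le; apply SIN_bound.
      - apply (ex_series_bound a _ (Rabs M)); auto. intros; lra.
      - intros n. apply Rmult_le_compat_l. auto. unfold M, Cmod. simpl.
        pose proof (cs_bound Sc Ss (th n)). simpl in H. exact H. }
    assert (0 <= M) by apply Cmod_ge_0.
    destruct (Req_dec M 0). lra.
    apply (Rmult_le_reg_r M). lra. exact HMN. }
  unfold zcheck. rewrite Hcs, HN.
  assert (HNC : RtoC N <> 0%C). { intros E. apply (f_equal fst) in E. simpl in E. lra. }
  rewrite Cmod_mult, Cmod_div by exact HNC. rewrite Cmod_R, Rabs_pos_eq by lra.
  fold r M. unfold Rdiv.
  assert (0 <= r) by apply Cmod_ge_0.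
  assert (0 <= M) by apply Cmod_ge_0.
  rewrite Rmult_assoc. rewrite <- (Rmult_1_r r) at 2. apply Rmult_le_compat_l. auto.
  apply (Rmult_le_reg_l N). lra.
  rewrite <- Rmult_assoc, Rinv_r by lra. lra.
Qed.
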